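(* Let $Y$ be a real random variable and $\mathbf X=(X_1,\dots,X_p)^\top$ a random vector in $\mathbb R^p$. Let $J\subset\{1,\dots,p\}$ be a set of indices, $\mathbf X_J=(X_j)_{j\in J}$ and $\mathbf X_{\bar J}=(X_j)_{j\notin J}$. Assume the additive regression model $$Y = f_J(\mathbf X_J)+f_{\bar J}(\mathbf X_{\bar J})+\varepsilon,$$ where $f_J,f_{\bar J}$ are measurable functions with $\mathbb E[f_J(\mathbf X_J)^2]<\infty$ and $\mathbb E[f_{\bar J}(\mathbf X_{\bar J})^2]<\infty$, and $\varepsilon$ is a random variable with $\mathbb E[\varepsilon\mid\mathbf X]=0$ and $\mathbb E[\varepsilon^2\mid \mathbf X]$ finite. Then the grouped variable importance of $\mathbf X_J$ satisfies $$\mathcal I(\mathbf X_J)=2\,\mathrm{Var}\big[f_J(\mathbf X_J)\big].$$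
   Context: Let $f(\mathbf x)=\mathbb E[Y\mid \mathbf X=\mathbf x]$ be the regression function (here $f(\mathbf x)=f_J(\mathbf x_J)+f_{\bar J}(\mathbf x_{\bar J})$). For a set of indices $J=\{j_1<\dots<j_k\}\subset\{1,\dots,p\}$, let $\mathbf X'_J=(X'_{j_1},\dots,X'_{j_k})^\top$ be a random vector with the same distribution as $\mathbf X_J$, independent of $(\mathbf X,Y)$ (so independent of $Y$ and of all predictors), and let $\mathbf X_{(J)}$ be the vector obtained from $\mathbf X$ by replacing each coordinate $X_{j}$, $j\in J$, by $X'_{j}$. The grouped (permutation) variable importance of $\mathbf X_J$ is $$\mathcal I(\mathbf X_J):=\mathbb E\big[(Y-f(\mathbf X_{(J)}))^2\big]-\mathbb E\big[(Y-f(\mathbf X))^2\big].$$ For a single index $j$, $\mathcal I(X_j)$ denotes $\mathcal I(\mathbf X_{\{j\}})$. *)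

(* Defs.v *)
From HB Require Import structures.
From mathcomp Require Import all_boot all_order all_algebra.
From mathcomp Require Import all_classical all_reals all_analysis.
Set Implicit Arguments. Unset Strict Implicit. Unset Printing Implicit Defensive.
Import Order.TTheory GRing.Theory Num.Theory.
Local Open Scope classical_set_scope.
Local Open Scope ring_scope.

(* Points of R^p are p.-tuples (product sigma-algebra on p.-tuple R). *)

(* x_J = (x_j)_{j in J}, listed in increasing order of j (enum order of 'I_p). *)
Definition restr (R : Type) (p : nat) (J : {set 'I_p}) (x : p.-tuple R)
  : #|J|.-tuple R :=
  [tuple tnth x (enum_val i) | i < #|J|].

Definition replace (R : Type) (p : nat) (J : {set 'I_p}) (x x' : p.-tuple R)
  : p.-tuple R :=
  [tuple if i \in J then tnth x' i else tnth x i | i < p].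

(* Grouped permutation importance of X_J for the regression function f,
   where X' is a random vector whose J-coordinates form the independent copy
   X'_J (its other coordinates are never used):
   I(X_J) = E[(Y - f(X_(J)))^2] - E[(Y - f(X))^2]. *)
Definition grouped_importance (R : realType) (d : measure_display)
  (T : measurableType d) (P : probability T R) (p : nat) (J : {set 'I_p})
  (f : p.-tuple R -> R) (X X' : T -> p.-tuple R) (Y : T -> R) : \bar R :=
  (\int[P]_t ((Y t - f (replace J (X t) (X' t))) ^+ 2)%:E
   - \int[P]_t ((Y t - f (X t)) ^+ 2)%:E)%E.

(* Main.v *)
Require Import Defs.
From HB Require Import structures.
From mathcomp Require Import all_boot all_order all_algebra.
From mathcomp Require Import all_classical all_reals all_analysis.
From mathcomp Require Import measurable_realfun.
From mathcomp Require Import ring lra.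
Import Order.TTheory GRing.Theory Num.Theory.
Import numFieldNormedType.Exports.
Set Implicit Arguments. Unset Strict Implicit.
Local Open Scope classical_set_scope.
Local Open Scope ring_scope.

Lemma restr_replace (R : Type) (p : nat) (J : {set 'I_p}) (x x' : p.-tuple R) :
  restr J (replace J x x') = restr J x'.
Proof.
apply: eq_from_tnth => i; rewrite /restr /replace !tnth_mktuple.
by rewrite (enum_valP i).
Qed.

Lemma restrC_replace (R : Type) (p : nat) (J : {set 'I_p}) (x x' : p.-tuple R) :
  restr (~: J) (replace J x x') = restr (~: J) x.
Proof.
apply: eq_from_tnth => i; rewrite /restr /replace !tnth_mktuple.
by have := enum_valP i; rewrite inE => /negbTE ->.
Qed.

Lemma measurable_restr (R : realType) (p : nat) (J : {set 'I_p}) :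
  measurable_fun setT (restr J : p.-tuple R -> #|J|.-tuple R).
Proof.
apply/measurable_fun_tnthP => i.
have -> : (@tnth _ R ^~ i \o restr J) = (@tnth _ R ^~ (enum_val i)).
  by apply/funext => x /=; rewrite /restr tnth_mktuple.
exact: measurable_tnth.
Qed.
Lemma maxpos_mul (R : realDomainType) (a b : R) :
  Num.max (a * b) 0 = Num.max a 0 * Num.max b 0 + Num.max (- a) 0 * Num.max (- b) 0.
Proof.
rewrite /Num.max.
by repeat (case: ifPn; rewrite -?leNgt => ?); nra.
Qed.

Lemma maxneg_mul (R : realDomainType) (a b : R) :
  Num.max (- (a * b)) 0 = Num.max a 0 * Num.max (- b) 0 + Num.max (- a) 0 * Num.max b 0.
Proof.
by rewrite -mulrN maxpos_mul opprK.
Qed.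

Lemma le_max0 (R : realDomainType) (a : R) : 0 <= Num.max a 0.
Proof. by rewrite le_max lexx orbT. Qed.

Lemma alg4 (R : realDomainType) (a b c e : \bar R) :
  a \is a fin_num -> b \is a fin_num -> c \is a fin_num -> e \is a fin_num ->
  ((a * c + b * e) - (a * e + b * c) = (a - b) * (c - e))%E.
Proof.
case: a => // a _; case: b => // b _; case: c => // c _; case: e => // e _.
by rewrite /=; congr EFin; ring.
Qed.

Lemma posnegE (R : realDomainType) (a : R) : a = Num.max a 0 - Num.max (- a) 0.
Proof. by rewrite /Num.max; repeat (case: ifPn; rewrite -?leNgt => ?); lra. Qed.

Lemma sube0_eq (R : numDomainType) (x y : \bar R) : y \is a fin_num ->
  (x - y = 0 -> x = y)%E.
Proof. by move=> fy H; rewrite -(subeK x fy) H add0e. Qed.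

Section Signed.
Context d (T : measurableType d) (R : realType) (mu : {measure set T -> \bar R}).

Lemma split1 D (u : T -> R) : measurable D -> mu.-integrable D (EFin \o u) ->
  (\int[mu]_(t in D) (u t)%:E = \int[mu]_(t in D) (Num.max (u t) 0)%:E
    - \int[mu]_(t in D) (Num.max (- u t) 0)%:E)%E.
Proof.
move=> mD iu.
have ip := integrable_funrpos mD iu; have ineg := integrable_funrneg mD iu.
rewrite -(integralB_EFin mD ip ineg).
by apply: eq_integral => t _; rewrite -EFinB -posnegE.
Qed.

Lemma pos_fin D (u : T -> R) : measurable D -> mu.-integrable D (EFin \o u) ->
  (\int[mu]_(t in D) (Num.max (u t) 0)%:E \is a fin_num)%E.
Proof. move=> mD iu; apply: (integrable_fin_num mD); exact: integrable_funrpos. Qed.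

Lemma neg_fin D (u : T -> R) : measurable D -> mu.-integrable D (EFin \o u) ->
  (\int[mu]_(t in D) (Num.max (- u t) 0)%:E \is a fin_num)%E.
Proof. move=> mD iu; apply: (integrable_fin_num mD); exact: integrable_funrneg. Qed.

Lemma prod_split (u v : T -> R) : measurable_fun setT u -> measurable_fun setT v ->
  mu.-integrable setT (fun t => (u t * v t)%:E) ->
  (\int[mu]_t (u t * v t)%:E =
    (\int[mu]_t (Num.max (u t) 0 * Num.max (v t) 0)%:E +
     \int[mu]_t (Num.max (- u t) 0 * Num.max (- v t) 0)%:E) -
    (\int[mu]_t (Num.max (u t) 0 * Num.max (- v t) 0)%:E +
     \int[mu]_t (Num.max (- u t) 0 * Num.max (v t) 0)%:E))%E
  /\ ((\int[mu]_t (Num.max (u t) 0 * Num.max (v t) 0)%:E +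
     \int[mu]_t (Num.max (- u t) 0 * Num.max (- v t) 0)%:E) \is a fin_num)%E
  /\ ((\int[mu]_t (Num.max (u t) 0 * Num.max (- v t) 0)%:E +
     \int[mu]_t (Num.max (- u t) 0 * Num.max (v t) 0)%:E) \is a fin_num)%E.
Proof.
move=> mu_ mv iuv.
have mp (f : T -> R) : measurable_fun setT f -> measurable_fun setT (fun t => Num.max (f t) 0).
  by move=> mf; exact: (measurable_funrpos mf).
have mn (f : T -> R) : measurable_fun setT f -> measurable_fun setT (fun t => Num.max (- f t) 0).
  by move=> mf; exact: (measurable_funrneg mf).
have mM (f g : T -> R) : measurable_fun setT f -> measurable_fun setT g ->
    measurable_fun setT (fun t => (f t * g t)%:E).
  by move=> mf mg; apply/measurable_EFinP; exact: measurable_funM.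
have g0 (a b : R) : (0 <= (Num.max a 0 * Num.max b 0)%:E)%E.
  by rewrite lee_fin mulr_ge0// le_max lexx orbT.
have Ep : (\int[mu]_t (Num.max (u t * v t) 0)%:E =
    \int[mu]_t (Num.max (u t) 0 * Num.max (v t) 0)%:E +
     \int[mu]_t (Num.max (- u t) 0 * Num.max (- v t) 0)%:E)%E.
  rewrite -ge0_integralD//; first by apply: eq_integral => t _; rewrite maxpos_mul EFinD.
  all: try (by move=> *; apply: g0).
  all: try (by apply: mM; first [apply: mn | apply: mp]).
have En : (\int[mu]_t (Num.max (- (u t * v t)) 0)%:E =
    \int[mu]_t (Num.max (u t) 0 * Num.max (- v t) 0)%:E +
     \int[mu]_t (Num.max (- u t) 0 * Num.max (v t) 0)%:E)%E.
  rewrite -ge0_integralD//; first by apply: eq_integral => t _; rewrite maxneg_mul EFinD.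
  all: try (by move=> *; apply: g0).
  all: try (by apply: mM; first [apply: mn | apply: mp]).
have iw : mu.-integrable setT (EFin \o (fun t => u t * v t)) by [].
split; first by rewrite (split1 measurableT iw) Ep En.
by rewrite -Ep -En; split; [exact: (pos_fin measurableT iw)|exact: (neg_fin measurableT iw)].
Qed.

End Signed.
Section L1.
Context d (T : measurableType d) (R : realType) (P : {measure set T -> \bar R}).
Context dS (S : measurableType dS).
Import HBNNSimple.

Lemma int_indic_mul (B : set T) (h : T -> R) :
  (\int[P]_(t in B) (h t)%:E = \int[P]_t (\1_B t * h t)%:E)%E.
Proof.
rewrite integral_mkcond; apply: eq_integral => t _.
rewrite /patch indicE; case: ifPn => _; by rewrite ?mul1r ?mul0r.
Qed.

Variables (Z Z' : T -> S) (h k : T -> R).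
Hypotheses (mZ : measurable_fun setT Z) (mZ' : measurable_fun setT Z').
Hypotheses (mh : measurable_fun setT h) (mk : measurable_fun setT k).
Hypotheses (h0 : forall t, 0 <= h t) (k0 : forall t, 0 <= k t).
Hypothesis hk : forall B, measurable B ->
  (\int[P]_(t in Z @^-1` B) (h t)%:E = \int[P]_(t in Z' @^-1` B) (k t)%:E)%E.

Let simple_eq (Zs : T -> S) (hs : T -> R) (mZs : measurable_fun setT Zs)
  (mhs : measurable_fun setT hs) (hs0 : forall t, 0 <= hs t) (s : {nnsfun S >-> R}) :
  (\int[P]_t (s (Zs t) * hs t)%:E =
   \sum_(x \in range s) x%:E * \int[P]_(t in Zs @^-1` (s @^-1` [set x])) (hs t)%:E)%E.
Proof.
have mpre x : measurable (Zs @^-1` (s @^-1` [set x])).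
  by rewrite -(setTI (_ @^-1` _)); apply: mZs => //; exact: measurable_funPTI.
transitivity (\int[P]_t (\sum_(x \in range s)
    (x * (\1_(Zs @^-1` (s @^-1` [set x])) t * hs t))%:E))%E.
  apply: eq_integral => t _; rewrite fsumEFin//; congr EFin.
  rewrite fimfunE mulr_fsuml; apply: eq_fsbigr => x _.
  by rewrite mulrA.
rewrite ge0_integral_fsum//; last 2 first.
- move=> x; apply/measurable_EFinP; apply: measurable_funM => //.
  apply: measurable_funM => //; exact: measurable_indic.
- move=> x t _; rewrite lee_fin mulrA; apply: mulr_ge0 => //.
  by have := nnfun_muleindic_ge0 s x (Zs t); rewrite -EFinM lee_fin.
apply: eq_fsbigr => x /set_mem [y _ <-].
under eq_integral do rewrite EFinM.
rewrite ge0_integralZl_EFin//.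
- by rewrite int_indic_mul.
- by move=> t _; rewrite lee_fin mulr_ge0.
- apply/measurable_EFinP; apply: measurable_funM => //; exact: measurable_indic.
Qed.

Lemma L1 (g : S -> R) : measurable_fun setT g -> (forall s, 0 <= g s) ->
  (\int[P]_t (g (Z t) * h t)%:E = \int[P]_t (g (Z' t) * k t)%:E)%E.
Proof.
move=> mg g0.
have mEg : measurable_fun setT (EFin \o g) by apply/measurable_EFinP.
pose gn := nnsfun_approx measurableT mEg.
have conv (Zs : T -> S) (hs : T -> R) t :
    (fun n => (gn n (Zs t) * hs t)%:E) @ \oo --> (g (Zs t) * hs t)%:E.
  under eq_fun do rewrite EFinM.
  rewrite EFinM; apply: cvgeM => //; last exact: cvg_cst.
  by apply: cvg_nnsfun_approx => // x _; rewrite lee_fin.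
have mono (Zs : T -> S) (hs : T -> R) (mZs : measurable_fun setT Zs)
  (mhs : measurable_fun setT hs) (hs0 : forall t, 0 <= hs t) :
  (\int[P]_t (g (Zs t) * hs t)%:E =
    limn (fun n => \int[P]_t (gn n (Zs t) * hs t)%:E))%E.
  rewrite -monotone_convergence//; last 3 first.
  - move=> n; apply/measurable_EFinP; apply: measurable_funM => //.
    exact: measurableT_comp.
  - by move=> n t _; rewrite lee_fin mulr_ge0.
  - move=> t _ m n mn; rewrite lee_fin ler_wpM2r//.
    exact/lefP/nd_nnsfun_approx.
  by apply: eq_integral => t _; apply/esym/cvg_lim => //; exact: conv.
rewrite (mono Z h)// (mono Z' k)//; congr (limn _); apply/funext => n.
rewrite (@simple_eq Z h mZ mh h0) (@simple_eq Z' k mZ' mk k0).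
apply: eq_fsbigr => x _; rewrite hk//.
Qed.

End L1.

Section Ind.
Context d (T : measurableType d) (R : realType) (P : probability T R).
Context d1 (S1 : measurableType d1) d2 (S2 : measurableType d2).
Variables (Z1 : T -> S1) (Z2 : T -> S2).
Hypotheses (mZ1 : measurable_fun setT Z1) (mZ2 : measurable_fun setT Z2).
Hypothesis indep : forall A B, measurable A -> measurable B ->
  P (Z1 @^-1` A `&` Z2 @^-1` B) = (P (Z1 @^-1` A) * P (Z2 @^-1` B))%E.

Lemma int_cstE (D : set T) (c : R) : measurable D ->
  (\int[P]_(t in D) (cst c t)%:E = c%:E * P D)%E.
Proof. by move=> mD; exact: (integral_cst P mD c%:E). Qed.

Lemma Ind_ge0 (g : S1 -> R) (k : S2 -> R) :
  measurable_fun setT g -> measurable_fun setT k ->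
  (forall s, 0 <= g s) -> (forall s, 0 <= k s) ->
  (\int[P]_t (k (Z2 t))%:E < +oo)%E ->
  (\int[P]_t (g (Z1 t) * k (Z2 t))%:E =
   \int[P]_t (g (Z1 t))%:E * \int[P]_t (k (Z2 t))%:E)%E.
Proof.
move=> mg mk g0 k0 kfin.
have mpre1 A : measurable A -> measurable (Z1 @^-1` A).
  by move=> mA; rewrite -(setTI (_ @^-1` _)); exact: mZ1.
have mpre2 A : measurable A -> measurable (Z2 @^-1` A).
  by move=> mA; rewrite -(setTI (_ @^-1` _)); exact: mZ2.
have kge0 : (0 <= \int[P]_t (k (Z2 t))%:E)%E.
  by apply: integral_ge0 => t _; rewrite lee_fin.
have kfn : (\int[P]_t (k (Z2 t))%:E)%E \is a fin_num.
  by rewrite ge0_fin_numE.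
have mkZ : measurable_fun setT (k \o Z2) by exact: measurableT_comp.
have stepa A : measurable A ->
  (\int[P]_t (k (Z2 t) * \1_(Z1 @^-1` A) t)%:E =
   (P (Z1 @^-1` A)) * \int[P]_t (k (Z2 t))%:E)%E.
  move=> mA.
  rewrite (@L1 _ _ _ P _ _ Z2 Z2 (\1_(Z1 @^-1` A)) (cst (fine (P (Z1 @^-1` A)))))//.
  - under eq_integral do rewrite EFinM muleC.
    rewrite ge0_integralZl_EFin//.
    + by rewrite fineK// fin_num_measure//; exact: mpre1.
    + by move=> t _; rewrite lee_fin.
    + exact/measurable_EFinP.
    + by rewrite fine_ge0// measure_ge0.
  - exact: measurable_indic (mpre1 _ mA).
  - by move=> t; rewrite fine_ge0// measure_ge0.
  - move=> B mB; have mA1 := mpre1 _ mA; have mB2 := mpre2 _ mB.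
    rewrite integral_indic//.
    transitivity ((fine (P (Z1 @^-1` A)))%:E * P (Z2 @^-1` B))%E; last first.
      by apply/esym/int_cstE/mpre2.
    rewrite fineK; first exact: indep.
    by rewrite fin_num_measure//; exact: mpre1.
set K := fine (\int[P]_t (k (Z2 t))%:E).
transitivity (\int[P]_t (g (Z1 t) * cst K t)%:E)%E.
  apply: (@L1 _ _ _ P _ _ Z1 Z1 (fun t => k (Z2 t)) (cst K)) => //.
  - by move=> t; rewrite fine_ge0.
  - move=> A mA; rewrite int_indic_mul.
    under eq_integral do rewrite mulrC.
    rewrite stepa//.
    transitivity (K%:E * P (Z1 @^-1` A))%E; last by apply/esym/int_cstE/mpre1.
    by rewrite fineK// muleC.
under eq_integral do rewrite EFinM muleC.
rewrite ge0_integralZl_EFin ?fine_ge0//.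
- by rewrite fineK// muleC.
- by move=> t _; rewrite lee_fin.
- apply/measurable_EFinP; exact: measurableT_comp.
Qed.

Lemma Ind_signed (g : S1 -> R) (k : S2 -> R) :
  measurable_fun setT g -> measurable_fun setT k ->
  P.-integrable setT (fun t => (g (Z1 t))%:E) ->
  P.-integrable setT (fun t => (k (Z2 t))%:E) ->
  P.-integrable setT (fun t => (g (Z1 t) * k (Z2 t))%:E) /\
  (\int[P]_t (g (Z1 t) * k (Z2 t))%:E =
   \int[P]_t (g (Z1 t))%:E * \int[P]_t (k (Z2 t))%:E)%E.
Proof.
move=> mg mk ig ik.
have mgZ : measurable_fun setT (fun t => g (Z1 t)) by exact: measurableT_comp.
have mkZ : measurable_fun setT (fun t => k (Z2 t)) by exact: measurableT_comp.
have ig' : P.-integrable setT (EFin \o (fun t => g (Z1 t))) by [].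
have ik' : P.-integrable setT (EFin \o (fun t => k (Z2 t))) by [].
have kfin (f : S2 -> R) : measurable_fun setT f -> (forall s, 0 <= f s) ->
    (forall s, f s <= `|k s|) -> (\int[P]_t (f (Z2 t))%:E < +oo)%E.
  move=> mf f0 fk; apply: (@le_lt_trans _ _ (\int[P]_t `|(k (Z2 t))%:E|)%E).
    apply: ge0_le_integral => //.
    - by move=> t _; rewrite lee_fin.
    - by apply/measurable_EFinP; exact: measurableT_comp.
    - by apply: measurableT_comp => //; exact/measurable_EFinP.
    - by move=> t _; rewrite abse_EFin lee_fin.
  by case/integrableP: ik.
have nk (a : R) : Num.max a 0 <= `|a|.
  by rewrite ge_max normr_ge0 ler_norm.
have nk' (a : R) : Num.max (- a) 0 <= `|a|.
  by rewrite ge_max normr_ge0 -normrN ler_norm.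
have iprod : P.-integrable setT (fun t => (g (Z1 t) * k (Z2 t))%:E).
  apply/integrableP; split.
    by apply/measurable_EFinP; exact: measurable_funM.
  under eq_integral do rewrite abse_EFin normrM.
  rewrite (@Ind_ge0 (fun s => `|g s|) (fun s => `|k s|)) //.
  - apply: lte_mul_pinfty.
    + by apply: integral_ge0 => t _; rewrite lee_fin.
    + rewrite ge0_fin_numE; last by apply: integral_ge0 => t _; rewrite lee_fin.
      case/integrableP: (ig) => _ igf; apply: le_lt_trans igf.
      apply: ge0_le_integral => //.
      * apply/measurable_EFinP; apply: measurableT_comp => //.
      * by apply: measurableT_comp => //; exact/measurable_EFinP.
    + by apply: (kfin (fun s => `|k s|)) => //; exact: measurableT_comp.
  - exact: measurableT_comp.
  - exact: measurableT_comp.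
  - by apply: (kfin (fun s => `|k s|)) => //; exact: measurableT_comp.
split => //.
have [E _] := prod_split mgZ mkZ iprod.
rewrite E.
have mpk : measurable_fun setT (fun s => Num.max (k s) 0) by exact: (measurable_funrpos mk).
have mnk : measurable_fun setT (fun s => Num.max (- k s) 0) by exact: (measurable_funrneg mk).
have mpg : measurable_fun setT (fun s => Num.max (g s) 0) by exact: (measurable_funrpos mg).
have mng : measurable_fun setT (fun s => Num.max (- g s) 0) by exact: (measurable_funrneg mg).
rewrite (@Ind_ge0 (fun s => Num.max (g s) 0) (fun s => Num.max (k s) 0)) //;
  last 3 first.
- by move=> s; exact: le_max0.
- by move=> s; exact: le_max0.
- by apply: (kfin (fun s => Num.max (k s) 0)) => // s; rewrite ?le_max0 ?nk ?nk'.
rewrite (@Ind_ge0 (fun s => Num.max (- g s) 0) (fun s => Num.max (- k s) 0)) //;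
  last 3 first.
- by move=> s; exact: le_max0.
- by move=> s; exact: le_max0.
- by apply: (kfin (fun s => Num.max (- k s) 0)) => // s; rewrite ?le_max0 ?nk ?nk'.
rewrite (@Ind_ge0 (fun s => Num.max (g s) 0) (fun s => Num.max (- k s) 0)) //;
  last 3 first.
- by move=> s; exact: le_max0.
- by move=> s; exact: le_max0.
- by apply: (kfin (fun s => Num.max (- k s) 0)) => // s; rewrite ?le_max0 ?nk ?nk'.
rewrite (@Ind_ge0 (fun s => Num.max (- g s) 0) (fun s => Num.max (k s) 0)) //;
  last 3 first.
- by move=> s; exact: le_max0.
- by move=> s; exact: le_max0.
- by apply: (kfin (fun s => Num.max (k s) 0)) => // s; rewrite ?le_max0 ?nk ?nk'.
rewrite (split1 measurableT ig') (split1 measurableT ik').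
apply: alg4.
- exact: (pos_fin measurableT ig').
- exact: (neg_fin measurableT ig').
- exact: (pos_fin measurableT ik').
- exact: (neg_fin measurableT ik').
Qed.

End Ind.


Section CE.
Context d (T : measurableType d) (R : realType) (P : {measure set T -> \bar R}).
Context dS (S : measurableType dS).

Lemma CE (Z : T -> S) (e : T -> R) (u : S -> R) :
  measurable_fun setT Z -> measurable_fun setT e -> measurable_fun setT u ->
  P.-integrable setT (EFin \o e) ->
  (forall B, measurable B -> (\int[P]_(t in Z @^-1` B) (e t)%:E = 0)%E) ->
  P.-integrable setT (fun t => (u (Z t) * e t)%:E) ->
  (\int[P]_t (u (Z t) * e t)%:E = 0)%E.
Proof.
move=> mZ me mu ie ce iue.
have muZ : measurable_fun setT (fun t => u (Z t)) by exact: measurableT_comp.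
have [E [f1 f2]] := prod_split muZ me iue.
have hk B : measurable B -> (\int[P]_(t in Z @^-1` B) (Num.max (e t) 0)%:E =
    \int[P]_(t in Z @^-1` B) (Num.max (- e t) 0)%:E)%E.
  move=> mB; have mD : measurable (Z @^-1` B).
    by rewrite -(setTI (_ @^-1` _)); exact: mZ.
  have ieD : P.-integrable (Z @^-1` B) (EFin \o e).
    exact: integrableS ie.
  apply: sube0_eq; first exact: neg_fin.
  by rewrite -split1 // ce.
have mep : measurable_fun setT (fun t => Num.max (e t) 0) by exact: (measurable_funrpos me).
have men : measurable_fun setT (fun t => Num.max (- e t) 0) by exact: (measurable_funrneg me).
have E1 := @L1 _ _ _ P _ _ Z Z (fun t => Num.max (e t) 0) (fun t => Num.max (- e t) 0)
  mZ mZ mep men (fun t => le_max0 _) (fun t => le_max0 _) hk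
  (fun s => Num.max (u s) 0) (measurable_funrpos mu) (fun s => le_max0 _).
have E2 := @L1 _ _ _ P _ _ Z Z (fun t => Num.max (e t) 0) (fun t => Num.max (- e t) 0)
  mZ mZ mep men (fun t => le_max0 _) (fun t => le_max0 _) hk
  (fun s => Num.max (- u s) 0) (measurable_funrneg mu) (fun s => le_max0 _).
rewrite /= in E1 E2.
rewrite E2 in f2.
by rewrite E E1 E2 subee.
Qed.

End CE.

Section EqLaw.
Context d (T : measurableType d) (R : realType) (P : probability T R).
Context dS (S : measurableType dS).
Variables (Z Z' : T -> S).
Hypotheses (mZ : measurable_fun setT Z) (mZ' : measurable_fun setT Z').
Hypothesis law : forall A, measurable A -> P (Z' @^-1` A) = P (Z @^-1` A).

Lemma EqLaw0 (g : S -> R) : measurable_fun setT g -> (forall s, 0 <= g s) ->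
  (\int[P]_t (g (Z' t))%:E = \int[P]_t (g (Z t))%:E)%E.
Proof.
move=> mg g0.
have mpre (W : T -> S) A : measurable_fun setT W -> measurable A -> measurable (W @^-1` A).
  by move=> mW mA; rewrite -(setTI (_ @^-1` _)); exact: mW.
have := @L1 _ _ _ P _ _ Z' Z (cst 1) (cst 1) mZ' mZ (measurable_cst _) (measurable_cst _)
  (fun _ => ler01) (fun _ => ler01).
move=> H.
have hk : forall A, measurable A -> (\int[P]_(t in Z' @^-1` A) (cst (1:R) t)%:E
    = \int[P]_(t in Z @^-1` A) (cst (1:R) t)%:E)%E.
  move=> A mA.
  rewrite (int_cstE _ _ (mpre _ _ mZ' mA)) (int_cstE _ _ (mpre _ _ mZ mA)).
  by rewrite law.
have E := H hk g mg g0.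
under eq_integral do rewrite -[g (Z' _)]mulr1.
under [RHS]eq_integral do rewrite -[g (Z _)]mulr1.
exact: E.
Qed.

Lemma EqLaw (g : S -> R) : measurable_fun setT g ->
  P.-integrable setT (fun t => (g (Z t))%:E) ->
  P.-integrable setT (fun t => (g (Z' t))%:E) /\
  (\int[P]_t (g (Z' t))%:E = \int[P]_t (g (Z t))%:E)%E.
Proof.
move=> mg ig.
have ig' : P.-integrable setT (fun t => (g (Z' t))%:E).
  apply/integrableP; split.
    by apply/measurable_EFinP; exact: measurableT_comp.
  under eq_integral do rewrite abse_EFin.
  rewrite (EqLaw0 (g := fun s => `|g s|)) //; last exact: measurableT_comp.
  case/integrableP: (ig) => _ igf; apply: le_lt_trans igf.
  apply: ge0_le_integral => //.
  * by apply/measurable_EFinP; apply: measurableT_comp => //; exact: measurableT_comp.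
  * by apply: measurableT_comp => //; apply/measurable_EFinP; exact: measurableT_comp.
split => //.
have ig1 : P.-integrable setT (EFin \o (fun t => g (Z t))) by [].
have ig2 : P.-integrable setT (EFin \o (fun t => g (Z' t))) by [].
rewrite (split1 measurableT ig1) (split1 measurableT ig2).
rewrite (EqLaw0 (g := fun s => Num.max (g s) 0)) //; last 2 first.
- exact: (measurable_funrpos mg).
- by move=> s; exact: le_max0.
rewrite (EqLaw0 (g := fun s => Num.max (- g s) 0)) //.
- exact: (measurable_funrneg mg).
- by move=> s; exact: le_max0.
Qed.

End EqLaw.

Section Helpers.
Context d (T : measurableType d) (R : realType) (P : probability T R).

Lemma intD' (f g : T -> R) :
  P.-integrable setT (fun t => (f t)%:E) -> P.-integrable setT (fun t => (g t)%:E) ->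
  P.-integrable setT (fun t => (f t + g t)%:E) /\
  (\int[P]_t (f t + g t)%:E = \int[P]_t (f t)%:E + \int[P]_t (g t)%:E)%E.
Proof.
move=> iff ig; split; first exact: (integrableD measurableT iff ig).
have iff' : P.-integrable setT (EFin \o f) by [].
have ig' : P.-integrable setT (EFin \o g) by [].
exact: (integralD_EFin measurableT iff' ig').
Qed.

Lemma intZ' (c : R) (f : T -> R) :
  P.-integrable setT (fun t => (f t)%:E) ->
  P.-integrable setT (fun t => (c * f t)%:E) /\
  (\int[P]_t (c * f t)%:E = c%:E * \int[P]_t (f t)%:E)%E.
Proof.
move=> iff; split; first exact: (integrableZl measurableT c iff).
exact: (integralZl measurableT iff c).
Qed.

Lemma sq_int (f : T -> R) : measurable_fun setT f ->
  (\int[P]_t ((f t) ^+ 2)%:E < +oo)%E ->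
  P.-integrable setT (fun t => ((f t) ^+ 2)%:E).
Proof.
move=> mf fin; apply/integrableP; split.
  apply/measurable_EFinP; exact: measurable_funX.
rewrite (eq_integral (fun t => ((f t) ^+ 2)%:E))// => t _.
by rewrite abse_EFin ger0_norm// sqr_ge0.
Qed.

Lemma le_int (f g : T -> R) : measurable_fun setT f ->
  (forall t, `|f t| <= g t) -> P.-integrable setT (fun t => (g t)%:E) ->
  P.-integrable setT (fun t => (f t)%:E).
Proof.
move=> mf fg ig; apply: (le_integrable measurableT _ _ ig).
  exact/measurable_EFinP.
move=> t _; rewrite !abse_EFin lee_fin (le_trans (fg t))//.
exact: ler_norm.
Qed.

Lemma L2L1 (f : T -> R) : measurable_fun setT f ->
  (\int[P]_t ((f t) ^+ 2)%:E < +oo)%E -> P.-integrable setT (fun t => (f t)%:E).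
Proof.
move=> mf fin; apply: (@le_int _ (fun t => 1 + f t ^+ 2)) => //.
  move=> t; have [x0|x0] := leP 0 (f t).
    by rewrite ger0_norm//; nra.
  by rewrite ltr0_norm//; nra.
have [] := intD' (finite_measure_integrable_cst P 1 measurableT) (sq_int mf fin).
by [].
Qed.

Lemma L2prod (f g : T -> R) : measurable_fun setT f -> measurable_fun setT g ->
  (\int[P]_t ((f t) ^+ 2)%:E < +oo)%E -> (\int[P]_t ((g t) ^+ 2)%:E < +oo)%E ->
  P.-integrable setT (fun t => (f t * g t)%:E).
Proof.
move=> mf mg ff fg; apply: (@le_int _ (fun t => f t ^+ 2 + g t ^+ 2)).
- exact: measurable_funM.
- move=> t; rewrite normrM.
  have := real_normK (num_real (f t)); have := real_normK (num_real (g t)).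
  have := normr_ge0 (f t); have := normr_ge0 (g t).
  nra.
- by have [] := intD' (sq_int mf ff) (sq_int mg fg).
Qed.

Lemma mkL2 (f : T -> R) : measurable_fun setT f ->
  (\int[P]_t ((f t) ^+ 2)%:E < +oo)%E -> f \in Lfun P 2%:E.
Proof.
move=> mf fin; rewrite inE; apply/andP; split; first by rewrite inE.
rewrite inE /= /finite_norm unlock /=; apply: poweR_lty.
under eq_integral do rewrite powR_mulrn// real_normK ?num_real//.
exact: fin.
Qed.

End Helpers.

Lemma Ind_signed' d (T : measurableType d) (R : realType) (P : probability T R)
  d1 (S1 : measurableType d1) d2 (S2 : measurableType d2)
  (Z1 : T -> S1) (Z2 : T -> S2) (mZ1 : measurable_fun setT Z1) (mZ2 : measurable_fun setT Z2)
  (indep : forall A B, measurable A -> measurable B ->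
    P (Z1 @^-1` A `&` Z2 @^-1` B) = (P (Z1 @^-1` A) * P (Z2 @^-1` B))%E)
  (g : S1 -> R) (k : S2 -> R) (G K : T -> R) :
  measurable_fun setT g -> measurable_fun setT k ->
  (forall t, G t = g (Z1 t)) -> (forall t, K t = k (Z2 t)) ->
  P.-integrable setT (fun t => (G t)%:E) ->
  P.-integrable setT (fun t => (K t)%:E) ->
  P.-integrable setT (fun t => (G t * K t)%:E) /\
  (\int[P]_t (G t * K t)%:E = \int[P]_t (G t)%:E * \int[P]_t (K t)%:E)%E.
Proof.
move=> mg mk hG hK.
have -> : G = (fun t => g (Z1 t)) by apply/funext.
have -> : K = (fun t => k (Z2 t)) by apply/funext.
exact: Ind_signed.
Qed.

Theorem proposition1 (R : realType) (d : measure_display) (T : measurableType d)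
  (P : probability T R) (p : nat) (J : {set 'I_p})
  (X X' : T -> p.-tuple R) (Y eps : T -> R)
  (fJ : #|J|.-tuple R -> R) (fJb : #|~: J|.-tuple R -> R) :
  measurable_fun setT X ->
  measurable_fun setT X' ->
  measurable_fun setT eps ->
  measurable_fun setT fJ ->
  measurable_fun setT fJb ->
  (* additive model *)
  (forall t, Y t = fJ (restr J (X t)) + fJb (restr (~: J) (X t)) + eps t) ->
  (* E[f_J(X_J)^2] < oo and E[f_Jbar(X_Jbar)^2] < oo *)
  (\int[P]_t ((fJ (restr J (X t))) ^+ 2)%:E < +oo)%E ->
  (\int[P]_t ((fJb (restr (~: J) (X t))) ^+ 2)%:E < +oo)%E ->
  (* E[eps | X] = 0 *)
  P.-integrable setT (EFin \o eps) ->
  (forall B : set (p.-tuple R), measurable B ->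
     (\int[P]_(t in X @^-1` B) (eps t)%:E = 0)%E) ->
  (* finite second moment of eps *)
  (\int[P]_t ((eps t) ^+ 2)%:E < +oo)%E ->
  (* X'_J has the same distribution as X_J *)
  (forall A : set (#|J|.-tuple R), measurable A ->
     P ((fun t => restr J (X' t)) @^-1` A) = P ((fun t => restr J (X t)) @^-1` A)) ->
  (* X'_J is independent of (X, Y) *)
  (forall (A : set (#|J|.-tuple R)) (B : set (p.-tuple R * R)),
     measurable A -> measurable B ->
     P ((fun t => restr J (X' t)) @^-1` A `&` (fun t => (X t, Y t)) @^-1` B)
     = (P ((fun t => restr J (X' t)) @^-1` A) * P ((fun t => (X t, Y t)) @^-1` B))%E) ->
  grouped_importance P J
    (fun x => fJ (restr J x) + fJb (restr (~: J) x)) X X' Y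
  = (2%:E * 'V_P[fun t => fJ (restr J (X t))])%E.
Proof.
move=> mX mX' meps mfJ mfJb model fA fB ie ce e2 law indep.
have mrJ := @measurable_restr R p J; have mrJc := @measurable_restr R p (~: J).
have mZ : measurable_fun setT (fun t => restr J (X t)) by exact: measurableT_comp.
have mZ' : measurable_fun setT (fun t => restr J (X' t)) by exact: measurableT_comp.
have mA : measurable_fun setT (fun t => fJ (restr J (X t))) by exact: measurableT_comp.
have mA' : measurable_fun setT (fun t => fJ (restr J (X' t))) by exact: measurableT_comp.
have mB : measurable_fun setT (fun t => fJb (restr (~: J) (X t))).
  by apply: measurableT_comp => //; exact: measurableT_comp.
have mY : measurable_fun setT Y.
  have -> : Y = (fun t => fJ (restr J (X t)) + fJb (restr (~: J) (X t)) + eps t).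
    by apply/funext => t; rewrite model.
  by apply: measurable_funD => //; exact: measurable_funD.
have mZ2 : measurable_fun setT (fun t => (X t, Y t)) by exact: measurable_fun_pair.
have iA2 := sq_int mA fA.
have iA := L2L1 mA fA.
have ie2 := sq_int meps e2.
have ie' : P.-integrable setT (fun t => (eps t)%:E) by [].
have [iA'2 EA'2] := @EqLaw _ _ _ P _ _ _ _ mZ mZ' law (fun x => fJ x ^+ 2)
  (measurable_funX 2 mfJ) iA2.
have [iA' EA'] := @EqLaw _ _ _ P _ _ _ _ mZ mZ' law fJ mfJ iA.
have mk1 : measurable_fun setT (fun z : p.-tuple R * R => fJ (restr J z.1)).
  by apply: measurableT_comp => //; exact: measurableT_comp.
have mk2 : measurable_fun setT (fun z : p.-tuple R * R =>
    z.2 - fJ (restr J z.1) - fJb (restr (~: J) z.1)).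
  apply: measurable_funB; last by apply: measurableT_comp => //; exact: measurableT_comp.
  by apply: measurable_funB => //.
have [iA'A EA'A] := Ind_signed' mZ' mZ2 indep mfJ mk1
  (G := fun t => fJ (restr J (X' t))) (K := fun t => fJ (restr J (X t)))
  (fun t => erefl) (fun t => erefl) iA' iA.
have [iA'e EA'e] := Ind_signed' mZ' mZ2 indep mfJ mk2
  (G := fun t => fJ (restr J (X' t))) (K := eps)
  (fun t => erefl) (fun t => ltac:(rewrite /= model; ring)) iA' ie'.
have iAe := L2prod mA meps fA e2.
have EAe := @CE _ _ _ P _ _ X eps (fun x => fJ (restr J x)) mX meps
  (measurableT_comp mfJ mrJ) ie ce iAe.
have Ee : (\int[P]_t (eps t)%:E = 0)%E.
  by have := ce setT measurableT; rewrite preimage_setT.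
rewrite /grouped_importance.
have E1 : (\int[P]_t ((Y t - (fun x => fJ (restr J x) + fJb (restr (~: J) x))
      (replace J (X t) (X' t))) ^+ 2)%:E =
    \int[P]_t (fJ (restr J (X t)) ^+ 2 + (fJ (restr J (X' t)) ^+ 2 + (eps t ^+ 2 +
      ((-2) * (fJ (restr J (X' t)) * fJ (restr J (X t))) +
       (2 * (fJ (restr J (X t)) * eps t) + (-2) * (fJ (restr J (X' t)) * eps t))))))%:E)%E.
  apply: eq_integral => t _; rewrite /= restr_replace restrC_replace model.
  congr EFin; ring.
have E2 : (\int[P]_t ((Y t - (fun x => fJ (restr J x) + fJb (restr (~: J) x))
      (X t)) ^+ 2)%:E = \int[P]_t (eps t ^+ 2)%:E)%E.
  apply: eq_integral => t _; rewrite /= model.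
  congr EFin; ring.
have [i6 I6] := intZ' (-2) iA'e.
have [i5 I5] := intZ' 2 iAe.
have [i56 I56] := intD' i5 i6.
have [i4 I4] := intZ' (-2) iA'A.
have [i456 I456] := intD' i4 i56.
have [i3456 I3456] := intD' ie2 i456.
have [i2 I2] := intD' iA'2 i3456.
have [i1 I1] := intD' iA2 i2.
rewrite E1 E2 I1 I2 I3456 I456 I4 I56 I5 I6 EA'2 EA'A EA'e EAe Ee EA'.
rewrite varianceE; last exact: mkL2 mA fA.
rewrite unlock.
have E3 : (\int[P]_w (((fun t : T => fJ (restr J (X t))) ^+ 2) w)%:E =
    \int[P]_t (fJ (restr J (X t)) ^+ 2)%:E)%E.
  by apply: eq_integral => t _; rewrite !expr2.
rewrite E3.
have fa2 := integrable_fin_num measurableT iA2.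
have fm := integrable_fin_num measurableT iA.
have fe2 := integrable_fin_num measurableT ie2.
move: fa2 fm fe2.
move: (\int[P]_t (fJ (restr J (X t)) ^+ 2)%:E)%E (\int[P]_t (fJ (restr J (X t)))%:E)%E
  (\int[P]_t (eps t ^+ 2)%:E)%E => a b c.
case: a => // a _; case: b => // b _; case: c => // c _.
rewrite /=; congr EFin; ring.
Qed.
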